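(* Let $(M,d)$ be a complete metric space and $X\subseteq M$ compact. Assume that every $\mu\in P(X)$ admits a barycenter in $M$, and that $conv(X)$ is compact. Assume moreover that at least one variance maximizing probability measure $\mu\in P(X)$ (i.e. a maximizer of $Var$ over $P(X)$) has a unique barycenter. Then the circumradius of $X$ in $M$ equals the circumradius of $i(X)$ in $(P(M),W_2)$.
   Context: $P(\cdot)$ denotes Borel probability measures. $Var(\mu)=\inf_{y\in M}\int_X d^2(x,y)\,d\mu(x)$, and a barycenter of $\mu$ is a point of $M$ attaining this infimum; $conv(X)$ is the set of all barycenters of measures in $P(X)$. The circumradius of $X$ in $M$ is $\inf_{y\in M}\sup_{x\in X}d(x,y)$. $W_2$ is the Wasserstein distance on $P(M)$, with $W_2^2(\delta_x,\nu)=\int_M d^2(x,y)\,d\nu(y)$; $i(x)=\delta_x$, and the circumradius of $i(X)$ is $\inf_{\nu\in P(M)}\sup_{x\in X}W_2(\delta_x,\nu)$. *)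

(* Defs.v *)
From HB Require Import structures.
From mathcomp Require Import all_boot all_order all_algebra.
From mathcomp Require Import all_classical all_reals all_analysis.
Set Implicit Arguments. Unset Strict Implicit. Unset Printing Implicit Defensive.
Import Order.TTheory GRing.Theory Num.Theory.
Local Open Scope classical_set_scope.
Local Open Scope ring_scope.

Notation borel T := (g_sigma_algebraType (@open T)).

(* Metric spaces equipped with a distinguished point (needed by the library to
   build the Borel sigma-algebra; harmless here since the hypotheses force
   X, hence M, to be nonempty). *)
#[short(type="pointedMetricType")]
HB.structure Definition PointedMetric (K : numDomainType) :=
  { M of Pointed M & Metric K M }.

Section barycenters.
Context {R : realType} {M : pointedMetricType R}.
Local Open Scope ereal_scope.

Definition complete_metric :=
  forall F : set_system M, ProperFilter F -> cauchy F -> exists x : M, F --> x.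

Notation PM := (probability (borel M) R).

Definition in_PX (X : set M) (mu : PM) : Prop := mu X = 1.

Definition sqdist_int (X : set M) (mu : PM) (y : M) : \bar R :=
  \int[mu]_(x in X) ((mdist (x : M) y) ^+ 2)%:E.

Definition Var_bary (X : set M) (mu : PM) : \bar R :=
  ereal_inf (range (sqdist_int X mu)).

Definition is_bary (X : set M) (mu : PM) (y : M) : Prop :=
  sqdist_int X mu y = Var_bary X mu.

Definition conv_bary (X : set M) : set M :=
  [set y | exists mu : PM, in_PX X mu /\ is_bary X mu y].

Definition circumradius (X : set M) : \bar R :=
  ereal_inf (range (fun y : M => ereal_sup [set (mdist x y)%:E | x in X])).

(* W_2(delta_x, nu) = sqrt (\int_M d^2(x,y) dnu(y)) *)
Definition W2_dirac (x : M) (nu : PM) : \bar R :=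
  sqrte (\int[nu]_y ((mdist x (y : M)) ^+ 2)%:E).

Definition circumradius_iX (X : set M) : \bar R :=
  ereal_inf (range (fun nu : PM => ereal_sup [set W2_dirac x nu | x in X])).

End barycenters.

(* Main.v *)
Require Import Defs.
From HB Require Import structures.
From mathcomp Require Import all_boot all_order all_algebra.
From mathcomp Require Import all_classical all_reals all_analysis.
From mathcomp Require Import lra measurable_realfun.
Import Order.TTheory GRing.Theory Num.Theory.
Import numFieldTopology.Exports numFieldNormedType.Exports.
Local Open Scope classical_set_scope.
Local Open Scope ring_scope.

Section basics.
Context {R : realType} {M : pointedMetricType R}.
Local Notation dist x y := (@mdist R M x y : R).

Lemma open_meas (A : set M) : open A -> measurable (A : set (borel M)).
Proof. by move=> oA; apply: sub_sigma_algebra. Qed.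

Lemma closed_meas (A : set M) : closed A -> measurable (A : set (borel M)).
Proof.
move=> cA; rewrite -(setCK A); apply: measurableC; apply: open_meas.
exact: closed_openC.
Qed.

Lemma dist_le_norm x y z : `|dist x y - dist z y| <= dist x z.
Proof.
have h1 := metric_triangle z x y; have h2 := metric_triangle x z y.
rewrite (metric_sym z x) in h1.
by rewrite ler_norml; apply/andP; split; lra.
Qed.

Lemma dist_cont y : continuous (fun x : M => (dist x y : R)).
Proof.
move=> x; apply/cvgrPdist_lt => e e0.
have := nbhsx_ballx x e e0; apply: filterS => z; rewrite ballEmdist /= => xz.
exact: le_lt_trans (dist_le_norm x y z) xz.
Qed.

Lemma dist_cont2 x : continuous (fun y : M => (dist x y : R)).
Proof. by under eq_fun do rewrite metric_sym; exact: dist_cont. Qed.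

Lemma cont_meas (f : M -> R) (D : set M) : measurable (D : set (borel M)) ->
  continuous f -> @measurable_fun _ _ (borel M) R D f.
Proof.
move=> mD /continuousP cf; apply: (measurability _ (measurable_realfun.RGenOpens.measurableE R)).
move=> _ [_ [a [b ->]] <-]; apply: measurableI => //.
apply: open_meas; apply: cf; exact: interval_open.
Qed.

Lemma ball_meas (x : M) e : measurable ([set y | dist x y < e] : set (borel M)).
Proof.
apply: open_meas.
have h := (proj1 (continuousP _) (dist_cont2 x)). have o := @open_lt R e. exact (h _ o).
Qed.

Lemma meas_d2l (y : M) (D : set M) (a b : R) : measurable (D : set (borel M)) ->
  @measurable_fun _ _ (borel M) _ D (fun x => (a * dist x y ^+ 2 + b)%:E).
Proof.
move=> mD; apply/measurable_EFinP.
apply: measurable_funD => //; apply: measurable_funM => //.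
by apply: measurable_funX; apply: cont_meas => //; exact: dist_cont.
Qed.

Lemma meas_d2l' (y : M) (D : set M) : measurable (D : set (borel M)) ->
  @measurable_fun _ _ (borel M) _ D (fun x => (dist x y ^+ 2)%:E).
Proof.
move=> mD; have := meas_d2l y D 1 0 mD.
by apply: eq_measurable_fun => x _; rewrite mul1r addr0.
Qed.

Lemma meas_d2r (x : M) (D : set M) (a b : R) : measurable (D : set (borel M)) ->
  @measurable_fun _ _ (borel M) _ D (fun y => (a * dist x y ^+ 2 + b)%:E).
Proof.
move=> mD; have := meas_d2l x D a b mD.
by apply: eq_measurable_fun => y _; rewrite metric_sym.
Qed.

Lemma meas_d2r' (x : M) (D : set M) : measurable (D : set (borel M)) ->
  @measurable_fun _ _ (borel M) _ D (fun y => (dist x y ^+ 2)%:E).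
Proof.
move=> mD; have := meas_d2l' x D mD.
by apply: eq_measurable_fun => y _; rewrite metric_sym.
Qed.

Lemma sum_seq_ge (s : seq M) (F : M -> R) z : (forall w, 0 <= F w) ->
  z \in s -> F z <= \sum_(w <- s) F w.
Proof.
move=> F0; elim: s => // a s IH; rewrite in_cons big_cons => /orP[/eqP->|zs].
  by rewrite lerDl sumr_ge0.
by rewrite (le_trans (IH zs))// lerDr.
Qed.

Lemma net (X : set M) e : compact X -> 0 < e ->
  exists s : seq M, (forall z, z \in s -> X z) /\
    forall x, X x -> exists2 z, z \in s & dist z x < e.
Proof.
move=> cX e0; move: cX; rewrite compact_cover => /(_ M X (fun z => [set w | dist z w < e])).
case.
- move=> z _; have h := (proj1 (continuousP _) (dist_cont2 z)).
  have o := @open_lt R e. exact (h _ o).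
- move=> x Xx; exists x => //=; by rewrite mdistxx.
move=> D' D'X Xc; exists (finmap.enum_fset D'); split.
  by move=> z /D'X; rewrite inE.
by move=> x /Xc [z /= zD' zx]; exists z.
Qed.

Lemma bounded_dist (X : set M) y : compact X -> exists B : R, 0 <= B /\
  forall x, X x -> dist x y <= B.
Proof.
move=> /net /(_ ltr01) [s [sX ns]].
exists (1 + \sum_(w <- s) dist w y); split.
  by rewrite addr_ge0// sumr_ge0// => w _; exact: mdist_ge0.
move=> x /ns [z zs zx].
rewrite (le_trans (metric_triangle x z y))// (metric_sym x z); apply: lerD.
  exact: ltW.
have := @sum_seq_ge s (fun w => dist w y) z (fun w => mdist_ge0 w y) zs. exact.
Qed.

End basics.

Section reals.
Context {R : realType}.

Lemma sq_shift {a' a e : R} : 0 <= a' -> 0 <= a -> 0 <= e -> a' <= a + e ->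
  a' ^+ 2 <= (1 + e) * a ^+ 2 + (e + e ^+ 2).
Proof.
move=> a'0 a0 e0 h.
have h1 : a' ^+ 2 <= (a + e) ^+ 2 by rewrite ler_pXn2r// ?nnegrE// addr_ge0.
have h2 : e * (2 * a) <= e * (a ^+ 2 + 1).
  apply: ler_wpM2l => //; have := sqr_ge0 (a - 1); rewrite !expr2; nra.
apply: (le_trans h1); rewrite !expr2 in h2 *; nra.
Qed.

Lemma lim_le (a v c : R) : 0 <= c ->
  (forall d, 0 < d -> d <= 1 -> a <= v + d * c) -> a <= v.
Proof.
move=> c0 h; apply/ler_addgt0Pr => e e0.
pose d := Num.min 1 (e / (c + 1)).
have d0 : 0 < d by rewrite lt_min ltr01 divr_gt0// ltr_wpDl.
have d1 : d <= 1 by rewrite ge_min lexx.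
apply: (le_trans (h d d0 d1)); rewrite lerD2l.
have : d <= e / (c + 1) by rewrite ge_min lexx orbT.
rewrite ler_pdivlMr ?ltr_wpDl// => hd.
by apply: le_trans hd; rewrite mulrDr mulr1 lerDl ltW.
Qed.

End reals.

Section mix.
Context {R : realType} {d} {T : measurableType d}.
Variables (mu nu : probability T R) (t : R) (t0 : (0 <= t)%R) (t1 : (t <= 1)%R).
Let t1' : (0 <= 1 - t)%R. Proof. by rewrite subr_ge0. Qed.
Definition mixm := measure_add (mscale (NngNum t1') mu) (mscale (NngNum t0) nu).
HB.instance Definition _ := Measure.on mixm.
Lemma mixmE A : mixm A = ((1-t)%:E * mu A + t%:E * nu A)%E.
Proof. by rewrite /mixm measure_addE. Qed.
Let mixT : mixm setT = 1%E.
Proof. by rewrite mixmE !probability_setT !mule1 -EFinD subrK. Qed.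
HB.instance Definition _ := Measure_isProbability.Build _ _ _ mixm mixT.

Lemma mix_int (D : set T) (f : T -> \bar R) : measurable D ->
  (forall x, D x -> 0 <= f x)%E -> measurable_fun D f ->
  (\int[mixm]_(x in D) f x = (1-t)%:E * \int[mu]_(x in D) f x
                               + t%:E * \int[nu]_(x in D) f x)%E.
Proof.
move=> mD f0 mf; rewrite /mixm ge0_integral_measure_add//.
by rewrite !ge0_integral_mscale.
Qed.
End mix.

Section integrals.
Context {R : realType} {M : pointedMetricType R}.
Local Notation dist x y := (@mdist R M x y : R).
Local Notation PM := (probability (borel M) R).

Lemma int_affine (mu : PM) (D : set M) (h : M -> R) (a b : R) :
  measurable (D : set (borel M)) ->
  @measurable_fun _ _ (borel M) _ D (fun x => (h x)%:E) ->
  (forall x, D x -> 0 <= h x) -> 0 <= a -> 0 <= b ->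
  (\int[mu]_(x in D) (a * h x + b)%:E =
    a%:E * \int[mu]_(x in D) (h x)%:E + b%:E * mu D)%E.
Proof.
move=> mD mh h0 a0 b0.
under eq_integral do rewrite EFinD EFinM.
rewrite ge0_integralD//; last 2 first.
- by move=> x Dx; rewrite lee_fin mulr_ge0// h0.
- by apply: measurable_funeM.
rewrite ge0_integralZl_EFin//.
by congr (_ + _)%E; exact: integral_cst.
Qed.

End integrals.

Section variance.
Context {R : realType} {M : pointedMetricType R}.
Local Notation dist x y := (@mdist R M x y : R).
Local Notation PM := (probability (borel M) R).
Variables (X : set M) (cX : compact X).

Lemma mX : measurable (X : set (borel M)).
Proof. apply: closed_meas; apply: compact_closed => //; exact: metric_hausdorff. Qed.

Lemma sq_ge0 (mu : PM) y : (0 <= sqdist_int X mu y)%E.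
Proof. by apply: integral_ge0 => x _; rewrite lee_fin sqr_ge0. Qed.

Lemma sq_le (mu : PM) y B : in_PX X mu -> (forall x, X x -> dist x y <= B) ->
  (sqdist_int X mu y <= (B ^+ 2)%:E)%E.
Proof.
move=> PX hB; rewrite /sqdist_int.
have -> : (B ^+ 2)%:E = (\int[mu]_(x in X) (B ^+ 2)%:E)%E.
  rewrite (integral_cst mu mX); rewrite -[LHS]mule1; congr (_ * _)%E; exact/esym/PX.
apply: (ge0_le_integral mu mX).
- by move=> x _; rewrite lee_fin sqr_ge0.
- exact: (meas_d2l' y X mX).
- exact: measurable_cst.
- by move=> x Xx; rewrite lee_fin ler_pXn2r ?nnegrE ?mdist_ge0 ?hB// (le_trans (mdist_ge0 x y) (hB x Xx)).
Qed.

Lemma sq_fin (mu : PM) y : in_PX X mu -> sqdist_int X mu y \is a fin_num.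
Proof.
move=> PX; have [B [B0 hB]] := bounded_dist X y cX.
rewrite ge0_fin_numE ?sq_ge0//; apply: (le_lt_trans (sq_le _ _ _ PX hB)).
exact: ltey.
Qed.

Lemma Var_le (mu : PM) y : (Var_bary X mu <= sqdist_int X mu y)%E.
Proof. by apply: ge_ereal_inf; exists (sqdist_int X mu y) => //; exists y. Qed.

Lemma Var_ge0 (mu : PM) : (0 <= Var_bary X mu)%E.
Proof. by apply: le_ereal_inf_tmp => _ [y _ <-]; exact: sq_ge0. Qed.

Lemma Var_fin (mu : PM) : in_PX X mu -> Var_bary X mu \is a fin_num.
Proof.
move=> PX; rewrite ge0_fin_numE ?Var_ge0//.
apply: (le_lt_trans (Var_le mu point)); rewrite -ge0_fin_numE ?sq_ge0//.
exact: sq_fin.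
Qed.

End variance.

Section partB.
Context {R : realType} {M : pointedMetricType R}.
Local Notation dist x y := (@mdist R M x y : R).
Local Notation PM := (probability (borel M) R).

Lemma cluster_seq (K : set M) (y : nat -> M) : compact K -> (forall n, K (y n)) ->
  exists2 y0, K y0 & forall P : nat -> Prop, (\forall n \near \oo, P n) ->
    forall e, 0 < e -> exists n, P n /\ dist y0 (y n) < e.
Proof.
move=> cK Ky.
have [y0 [Ky0 cl]] : K `&` cluster (y @ \oo) !=set0.
  apply: (cK (y @ \oo)); exact: (@filterE _ \oo _ (fun n => K (y n)) Ky).
exists y0 => // P hP e e0.
have [z [[n Pn <-] bz]] := cl (y @` [set n | P n]) (ball y0 e)
  (filterS (fun n Pn => ex_intro2 _ _ n Pn erefl) hP) (nbhsx_ballx y0 e e0).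
by exists n; split => //; rewrite ballEmdist in bz.
Qed.

End partB.

Section partB2.
Context {R : realType} {M : pointedMetricType R}.
Local Notation dist x y := (@mdist R M x y : R).
Local Notation PM := (probability (borel M) R).

Lemma partB (X : set M) (cX : compact X)
  (hb : forall mu : PM, in_PX X mu -> exists y, is_bary X mu y)
  (cC : compact (conv_bary X)) (m : PM) (Pm : in_PX X m)
  (hmax : forall nu : PM, in_PX X nu -> (Var_bary X nu <= Var_bary X m)%E)
  (b : M) (ub : forall y, is_bary X m y -> y = b) (x0 : M) :
  X x0 -> ((dist x0 b ^+ 2)%:E <= Var_bary X m)%E.
Proof.
move=> Xx0.
have mXX := mX X cX.
have Vf := Var_fin X cX m Pm.
have V0 := Var_ge0 X m.
pose v := fine (Var_bary X m).
have Vv : Var_bary X m = v%:E by rewrite /v fineK.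
have v0 : 0 <= v by rewrite -lee_fin -Vv.
pose t n : R := (n.+2%:R)^-1.
have t0 n : 0 <= t n by rewrite invr_ge0.
have t1 n : t n <= 1 by rewrite invf_le1// ler1n.
pose nu n : PM := mixm m (@dirac _ (borel M) x0 R) (t n) (t0 n) (t1 n).
have Pnu n : in_PX X (nu n).
  rewrite /in_PX.
  have -> : (nu n) X = ((1 - t n)%:E * m X + (t n)%:E * @dirac _ (borel M) x0 R X)%E.
    exact: mixmE.
  rewrite diracE mem_set//.
  have -> : m X = 1%E by exact: Pm.
  by rewrite !mule1 -EFinD subrK.
have [y hy] := choice (fun n => hb (nu n) (Pnu n)).
have Cy n : conv_bary X (y n) by exists (nu n); split.
have mixI n z : sqdist_int X (nu n) z = ((1 - t n)%:E * sqdist_int X m z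
    + (t n)%:E * (dist x0 z ^+ 2)%:E)%E.
  rewrite /sqdist_int mix_int//; last 2 first.
  - by move=> x _; rewrite lee_fin sqr_ge0.
  - exact: (meas_d2l' z X mXX).
  rewrite integral_dirac//; last exact: (meas_d2l' z X mXX).
  by rewrite diracE mem_set// mul1e.
pose f n := fine (sqdist_int X m (y n)).
have fE n : sqdist_int X m (y n) = (f n)%:E by rewrite /f fineK// (sq_fin X cX).
have f0 n : 0 <= f n by rewrite -lee_fin -fE sq_ge0.
have key n : dist x0 (y n) ^+ 2 <= v /\ (1 - t n) * f n <= v.
  have h1 : (sqdist_int X (nu n) (y n) <= Var_bary X m)%E.
    by rewrite (hy n); exact: hmax.
  have h2 := Var_le X m (y n).
  rewrite mixI fE Vv -EFinM -EFinM -EFinD lee_fin in h1.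
  rewrite fE Vv lee_fin in h2.
  have tn0 : 0 < t n by rewrite invr_gt0.
  have tn1 : 0 <= 1 - t n by rewrite subr_ge0.
  have D0 := sqr_ge0 (dist x0 (y n)).
  split; last by nra.
  suff : t n * dist x0 (y n) ^+ 2 <= t n * v by rewrite ler_pM2l.
  nra.
have [y0 Cy0 cl] := cluster_seq _ _ cC Cy.
have claim1 : dist x0 y0 ^+ 2 <= v.
  apply: (@lim_le _ _ _ (v + 2)); first by rewrite addr_ge0.
  move=> e e0 e1.
  have [n [_ hn]] := cl (fun _ => True) (@filterE _ \oo _ (fun _ => True) (fun _ => I)) e e0.
  have [k1 _] := key n.
  have a0 := mdist_ge0 x0 (y n).
  have hh : dist x0 y0 <= dist x0 (y n) + e.
    apply: (le_trans (metric_triangle x0 (y n) y0)); rewrite lerD2l metric_sym.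
    exact: ltW.
  have := sq_shift (mdist_ge0 x0 y0) a0 (ltW e0) hh.
  move=> h; apply: (le_trans h); rewrite !expr2 in k1 *; nra.
have claim2 : (sqdist_int X m y0 <= Var_bary X m)%E.
  have fy0 := sq_fin X cX m y0 Pm.
  rewrite Vv -(fineK fy0) lee_fin.
  apply: (@lim_le _ _ _ (v + 4)); first by rewrite addr_ge0.
  move=> e e0 e1.
  have [n [hvn hn]] := cl _ (nbhs_infty_gtr (v / e)) e e0.
  have [_ k2] := key n.
  have fn : f n <= v + e.
    have n1 : (0 < n.+1%:R :> R) by [].
    have n2 : (0 < n.+2%:R :> R) by [].
    have tE : 1 - t n = n.+1%:R / n.+2%:R.
      rewrite /t; apply: (mulIf (lt0r_neq0 n2)); rewrite mulrBl divfK ?lt0r_neq0//.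
      by rewrite mulVf ?lt0r_neq0// mul1r -[n.+2]addn1 natrD addrK.
    rewrite tE in k2.
    have k3 : n.+1%:R * f n <= v * n.+2%:R by move: k2; rewrite mulrAC ler_pdivrMr.
    have hv : v < n%:R * e by move: hvn; rewrite ltr_pdivrMr.
    rewrite -[n.+2]addn1 natrD -[n.+1]addn1 natrD in k3.
    have hn0 : (0 <= n%:R :> R) by [].
    nra.
  have hle : (sqdist_int X m y0 <= ((1 + e) * f n + (e + e ^+ 2))%:E)%E.
    have -> : ((1 + e) * f n + (e + e ^+ 2))%:E =
        (\int[m]_(x in X) ((1 + e) * dist x (y n) ^+ 2 + (e + e ^+ 2))%:E)%E.
      rewrite (@int_affine _ _ m X (fun x => dist x (y n) ^+ 2)) //; last 4 first.
      - exact: (@meas_d2l' R M (y n) X mXX).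
      - by move=> x _; rewrite sqr_ge0.
      - by rewrite addr_ge0// ltW.
      - by rewrite addr_ge0 ?sqr_ge0// ltW.
      have -> : m X = 1%E by exact: Pm.
      have -> : (\int[m]_(x in X) (dist x (y n) ^+ 2)%:E)%E = (f n)%:E by exact: fE.
      by rewrite mule1 -EFinM -EFinD.
    apply: (ge0_le_integral m mXX).
    - by move=> x _; rewrite lee_fin sqr_ge0.
    - exact: (meas_d2l' y0 X mXX).
    - exact: (meas_d2l (y n) X _ _ mXX).
    - move=> x Xx; rewrite lee_fin; apply: sq_shift => //.
      + exact: mdist_ge0.
      + exact: mdist_ge0.
      + exact: ltW.
      + apply: (le_trans (metric_triangle x (y n) y0)); rewrite lerD2l metric_sym.
        exact: ltW.
  rewrite -(fineK fy0) lee_fin in hle.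
  apply: (le_trans hle); nra.
have by0 : is_bary X m y0.
  by apply/eqP; rewrite eq_le claim2 Var_le.
rewrite -(ub y0 by0) Vv lee_fin; exact: claim1.
Qed.

End partB2.

Section partC.
Context {R : realType} {M : pointedMetricType R}.
Local Notation dist x y := (@mdist R M x y : R).
Local Notation PM := (probability (borel M) R).
Variables (s : seq M) (e : R).
Local Notation n := (size s).
Let z (i : nat) := nth point s i.
Definition Bs i := [set x | dist (z i) x < e].
Definition As i := Bs i `\` \bigcup_(j in [set j | (j < i)%N]) Bs j.

Lemma As_meas i : measurable (As i : set (borel M)).
Proof.
apply: measurableD; first exact: ball_meas.
by apply: bigcup_measurable => j _; exact: ball_meas.
Qed.

Lemma As_point x : (exists2 k, (k < n)%N & Bs k x) ->
  exists j : 'I_n, Bs j x /\ forall i : 'I_n, (x \in As i) = (i == j).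
Proof.
move=> [k kn Bk].
have exP : exists k, (k < n)%N && (dist (z k) x < e).
  by exists k; rewrite kn; exact: Bk.
case: (ex_minnP exP) => j /andP[jn Bj] jmin.
exists (Ordinal jn); split => //= i.
apply/idP/idP.
- rewrite inE => -[Bi nB]; apply/eqP/val_inj => /=.
  apply/eqP; rewrite eqn_leq; apply/andP; split.
  + rewrite leqNgt; apply/negP => ji; apply: nB; exists j => //.
  + by apply: jmin; rewrite ltn_ord; exact: Bi.
- move=> /eqP ->; rewrite inE; split => //= -[j' /= j'j Bj'].
  have := jmin j'; rewrite (ltn_trans j'j jn) /=.
  have -> : (dist (z j') x < e) = true by exact: Bj'.
  by move=> /(_ isT); rewrite leqNgt j'j.
Qed.

Lemma As_sum x (a : 'I_n -> R) (j : 'I_n) :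
  (forall i : 'I_n, (x \in As i) = (i == j)) ->
  \sum_(i < n) (\1_(As i) x * a i) = a j.
Proof.
move=> h; rewrite (bigD1 j)//= big1 ?addr0.
  by rewrite indicE h eqxx mul1r.
by move=> i ij; rewrite indicE h (negbTE ij) mul0r.
Qed.

End partC.

Section partC2.
Context {R : realType} {M : pointedMetricType R}.
Local Notation dist x y := (@mdist R M x y : R).
Local Notation PM := (probability (borel M) R).

Lemma partC (X : set M) (cX : compact X) (mu : PM) (Pmu : in_PX X mu) (nu : PM)
  (c : R) : 0 <= c ->
  (forall x, X x -> (\int[nu]_y (dist x y ^+ 2)%:E <= c%:E)%E) ->
  (Var_bary X mu <= c%:E)%E.
Proof.
move=> c0 hc.
have mXX := mX X cX.
have Vf := Var_fin X cX mu Pmu.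
pose v := fine (Var_bary X mu).
have Vv : Var_bary X mu = v%:E by rewrite /v fineK.
rewrite Vv lee_fin.
apply: (@lim_le _ _ _ (c + 2)) => [|e e0 e1]; first by rewrite addr_ge0.
have [s [sX ns]] := net X e cX e0.
pose z (i : 'I_(size s)) := nth point s i.
have zX (i : 'I_(size s)) : X (z i) by apply: sX; exact: mem_nth.
pose g (i : 'I_(size s)) (y : M) := (1 + e) * dist (z i) y ^+ 2 + (e + e ^+ 2).
have g0 i y : 0 <= g i y.
  have e0' := ltW e0; rewrite /g.
  apply: addr_ge0; first apply: mulr_ge0.
  - by apply: addr_ge0.
  - exact: sqr_ge0.
  - by apply: addr_ge0 => //; exact: sqr_ge0.
pose p (i : 'I_(size s)) := fine (mu (As s e i `&` X)).
have pE i : (p i)%:E = mu (As s e i `&` X).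
  rewrite /p fineK//; apply: fin_num_measure; apply: measurableI => //.
  exact: As_meas.
have p0 i : 0 <= p i by rewrite -lee_fin pE measure_ge0.
have hpt x : X x -> exists j : 'I_(size s),
    Bs s e j x /\ forall i : 'I_(size s), (x \in As s e i) = (i == j).
  move=> Xx; apply: As_point; have [w ws wx] := ns x Xx.
  by exists (index w s); [rewrite index_mem | rewrite /Bs nth_index].
have mind (i : 'I_(size s)) (a : R) :
    @measurable_fun _ _ (borel M) _ X (fun x => \1_(As s e i) x * a).
  by apply: measurable_funM => //; apply: measurable_indic; exact: As_meas.
have intS (a : 'I_(size s) -> R) : (forall i, 0 <= a i) ->
    (\int[mu]_(x in X) (\sum_(i < size s) \1_(As s e i) x * a i)%:E =
      (\sum_(i < size s) p i * a i)%:E)%E.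
  move=> a0; under eq_integral do rewrite -sumEFin.
  rewrite ge0_integral_sum//; last 2 first.
  - by move=> i; apply/measurable_EFinP; exact: mind.
  - by move=> i x _; rewrite lee_fin mulr_ge0.
  rewrite -sumEFin; apply: eq_bigr => i _.
  under eq_integral do rewrite EFinM muleC.
  rewrite ge0_integralZl_EFin//.
  all: try (by move=> x _; rewrite lee_fin).
  all: try (by apply/measurable_EFinP; apply: measurable_indic; exact: As_meas).
  rewrite integral_indic//; last exact: As_meas.
  rewrite mulrC EFinM; congr (_ * _)%E; exact (esym (pE i)).
have sum_p : \sum_(i < size s) p i = 1.
  have := intS (fun _ => 1) (fun _ => ler01).
  have -> : (\int[mu]_(x in X) (\sum_(i < size s) \1_(As s e i) x * 1)%:E =
      \int[mu]_(x in X) (cst 1%E x))%E.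
    apply: eq_integral => x /[!inE] Xx.
    by have [j [_ hj]] := hpt x Xx; rewrite (@As_sum R M s e x _ j hj).
  rewrite integral_cst// mul1e.
  move=> h; have : ((\sum_(i < size s) p i * 1)%:E = 1%:E)%E.
    by rewrite -h; exact: Pmu.
  by under eq_bigr do rewrite mulr1; move=> [].
have step1 y : v <= \sum_(i < size s) p i * g i y.
  rewrite -lee_fin -Vv; apply: (le_trans (Var_le X mu y)).
  rewrite -intS//; apply: (ge0_le_integral mu mXX).
  - by move=> x _; rewrite lee_fin sqr_ge0.
  - exact: (meas_d2l' y X mXX).
  - by apply/measurable_EFinP; apply: measurable_sum => i; exact: mind.
  - move=> x Xx; have [j [Bj hj]] := hpt x Xx; rewrite (@As_sum R M s e x _ j hj) lee_fin.
    apply: sq_shift.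
    + exact: mdist_ge0.
    + exact: mdist_ge0.
    + exact: ltW.
    + apply: (le_trans (metric_triangle x (z j) y)); rewrite addrC lerD2l.
      by rewrite metric_sym; exact: ltW.
have mg i : @measurable_fun _ _ (borel M) _ setT (g i).
  by have /measurable_EFinP := meas_d2r (z i) setT (1 + e) (e + e ^+ 2) measurableT.
have e0' := ltW e0.
have K0 : 0 <= (1 + e) * c + (e + e ^+ 2).
  apply: addr_ge0; first apply: mulr_ge0 => //.
  - by apply: addr_ge0.
  - by apply: addr_ge0 => //; exact: sqr_ge0.
have h1 : (v%:E <= \int[nu]_y (\sum_(i < size s) p i * g i y)%:E)%E.
  have -> : v%:E = (\int[nu]_y (cst v%:E y))%E.
    rewrite integral_cst//; transitivity (v%:E * 1)%E; first by rewrite mule1.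
    congr (_ * _)%E; exact/esym/probability_setT.
  apply: (ge0_le_integral nu measurableT).
  - by move=> y _; rewrite lee_fin /v fine_ge0// Var_ge0.
  - exact: measurable_cst.
  - apply/measurable_EFinP; apply: measurable_sum => i.
    by apply: measurable_funM => //.
  - by move=> y _; rewrite lee_fin step1.
have h2 : (\int[nu]_y (\sum_(i < size s) p i * g i y)%:E <=
    ((1 + e) * c + (e + e ^+ 2))%:E)%E.
  under eq_integral do rewrite -sumEFin.
  rewrite ge0_integral_sum//; last 2 first.
  - move=> i; apply/measurable_EFinP.
    by apply: measurable_funM => //.
  - by move=> i y _; rewrite lee_fin mulr_ge0.
  apply: (@le_trans _ _ (\sum_(i < size s) (p i * ((1 + e) * c + (e + e ^+ 2)))%:E)%E).
    apply: lee_sum => i _.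
    under eq_integral do rewrite EFinM.
    rewrite ge0_integralZl_EFin//; last 2 first.
    - by move=> y _; rewrite lee_fin.
    - by apply/measurable_EFinP.
    rewrite EFinM; apply: lee_wpmul2l; first by rewrite lee_fin.
    rewrite /g (@int_affine _ _ nu setT (fun y => dist (z i) y ^+ 2)) //; last 4 first.
    - exact: (meas_d2r' (z i) setT measurableT).
    - by move=> y _; exact: sqr_ge0.
    - by apply: addr_ge0.
    - by apply: addr_ge0 => //; exact: sqr_ge0.
    apply: (@le_trans _ _ ((1 + e)%:E * c%:E + (e + e ^+ 2)%:E * 1)%E).
      apply: leeD.
      + apply: lee_wpmul2l; first by rewrite lee_fin addr_ge0.
        exact: (hc (z i) (zX i)).
      + apply: lee_wpmul2l; first by rewrite lee_fin addr_ge0// sqr_ge0.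
        exact: probability_le1.
    by rewrite mule1 -EFinM -EFinD.
  by rewrite sumEFin -mulr_suml sum_p mul1r.
have := le_trans h1 h2; rewrite lee_fin => h3.
apply: (le_trans h3); rewrite !expr2; nra.
Qed.

End partC2.

Lemma sqrte_sq {R : realType} (r : R) : 0 <= r -> sqrte ((r ^+ 2)%:E) = r%:E.
Proof. by move=> r0; rewrite EFin_expe sqrte_sqr gee0_abs// lee_fin. Qed.

Local Open Scope ereal_scope.

Theorem corollary3p2 (R : realType) (M : pointedMetricType R) (X : set M) :
  @complete_metric R M ->
  compact X ->
  (forall mu : probability (borel M) R, in_PX X mu ->
     exists y : M, is_bary X mu y) ->
  compact (conv_bary X) ->
  (exists mu : probability (borel M) R,
     [/\ in_PX X mu,
         (forall nu : probability (borel M) R, in_PX X nu -> Var_bary X nu <= Var_bary X mu) &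
         exists! y : M, is_bary X mu y]) ->
  circumradius X = circumradius_iX X.
Proof.
move=> _ cX hb cC [m [Pm hmax [b [bb ub]]]].
have ub' y : is_bary X m y -> y = b by move=> h; exact/esym/ub.
have hB := @partB R M X cX hb cC m Pm hmax b ub'.
have hC := @partC R M X cX m Pm.
have V0 := Var_ge0 X m.
have mXX := mX X cX.
have [x1 Xx1] : X !=set0.
  apply/set0P/negP => /eqP X0; move: Pm; rewrite /in_PX X0 measure0 => -[].
  by move=> /esym/eqP; rewrite oner_eq0.
apply/le_anti/andP; split.
- apply: (@le_trans _ _ (sqrte (Var_bary X m))).
  + apply: ge_ereal_inf; exists (ereal_sup [set (mdist x b)%:E | x in X]); first by exists b.
    apply: ge_ereal_sup => _ [x Xx <-].
    by rewrite -sqrte_sq ?mdist_ge0// lee_sqrt// hB.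
  + apply: le_ereal_inf_tmp => _ [nu _ <-].
    set S := ereal_sup _.
    have WS x : X x -> W2_dirac x nu <= S.
      by move=> Xx; apply: ereal_sup_ubound; exists x.
    have S0 : 0 <= S by apply: (le_trans _ (WS x1 Xx1)); exact: sqrte_ge0.
    move: S0 WS; case: S => [s| |] // S0 WS; last exact: leey.
    have s0 : (0 <= s)%R by rewrite -lee_fin.
    rewrite -(sqrte_sq s s0) lee_sqrt ?lee_fin ?sqr_ge0//.
    apply: (hC nu) => //; first exact: sqr_ge0.
    move=> x Xx; have := WS x Xx; rewrite /W2_dirac -(sqrte_sq s s0) lee_sqrt//.
    by rewrite lee_fin sqr_ge0.
- apply: le_ereal_inf_tmp => _ [y _ <-].
  apply: ge_ereal_inf.
  exists (ereal_sup [set W2_dirac x (@dirac _ (borel M) y R) | x in X]).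
    by exists (@dirac _ (borel M) y R).
  apply: ge_ereal_sup => _ [x Xx <-].
  have -> : W2_dirac x (@dirac _ (borel M) y R) = (mdist x y)%:E.
    rewrite /W2_dirac integral_dirac//; last exact: (meas_d2r' x setT measurableT).
    by rewrite diracE mem_set// mul1e sqrte_sq// mdist_ge0.
  by apply: ereal_sup_ubound; exists x.
Qed.
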